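(* Let $r$ and $t$ be positive integers with $r\ge 3$ and $2\le t\le \frac{r+4}{4}$, and let $n=3r-t$. If $\rho_2(K(n,r))\ge 5$, then there exists a $2$-packing $S$ of $K(n,r)$ with $|S|=5$ such that $i_x(S)\le 2$ for every $x\in[n]$.
   Context: For integers $n\ge 2r$, the Kneser graph $K(n,r)$ has as vertices the $r$-element subsets of $[n]=\{1,\dots,n\}$, two vertices being adjacent iff they are disjoint. A $2$-packing of a graph $G$ is a set of vertices pairwise at distance at least $3$ in $G$; $\rho_2(G)$ is the maximum cardinality of a $2$-packing. For a set $S$ of vertices of $K(n,r)$ and $x\in[n]$, $i_x(S)=|\{u\in S: x\in u\}|$ is the number of vertices of $S$ containing $x$. *)

(* Defs.v *)
From mathcomp Require Import all_boot all_order.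
Set Implicit Arguments. Unset Strict Implicit. Unset Printing Implicit Defensive.

(* Vertices of the Kneser graph K(n,r): r-element subsets of 'I_n
   ('I_n = {0,...,n-1} plays the role of [n] = {1,...,n}). *)
Definition knv (n r : nat) := {A : {set 'I_n} | #|A| == r}.

Definition kadj (n r : nat) : rel (knv n r) :=
  fun u v => [disjoint val u & val v].

(* In a simple graph given by the relation e, dist(u,v) >= 3 means:
   u <> v, u and v are not adjacent, and they have no common neighbour
   (distance possibly infinite). *)
Definition dist_ge3 (T : finType) (e : rel T) (u v : T) : bool :=
  [&& u != v, ~~ e u v & ~~ [exists w, e u w && e w v]].

Definition two_packing (T : finType) (e : rel T) (S : {set T}) : bool :=
  [forall u in S, forall v in S, (u != v) ==> dist_ge3 e u v].

Definition rho2 (T : finType) (e : rel T) : nat :=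
  \max_(S : {set T} | two_packing e S) #|S|.

Definition ix (n r : nat) (S : {set knv n r}) (x : 'I_n) : nat :=
  #|[set u in S | x \in val u]|.

(* Main.v *)
Require Import Defs.
From mathcomp Require Import all_boot all_order zify.
Set Implicit Arguments. Unset Strict Implicit. Unset Printing Implicit Defensive.

Fixpoint psum {T : finType} (s : seq {set T}) : nat :=
  if s is A :: s' then \sum_(B <- s') #|A :&: B| + psum s' else 0.

Lemma card_Ibigcup (T : finType) (A : {set T}) (s : seq {set T}) :
  #|A :&: \bigcup_(B <- s) B| <= \sum_(B <- s) #|A :&: B|.
Proof.
elim: s => [|B s IH]; first by rewrite !big_nil setI0 cards0.
rewrite !big_cons setIUr cardsU.
by apply: leq_trans (leq_subr _ _) _; apply: leq_add.
Qed.

Lemma bonf (T : finType) (s : seq {set T}) :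
  \sum_(A <- s) #|A| <= #|\bigcup_(A <- s) A| + psum s.
Proof.
elim: s => [|A s IH] /=; first by rewrite !big_nil.
rewrite !big_cons.
have := cardsUI A (\bigcup_(B <- s) B). have := card_Ibigcup A s. lia.
Qed.

Lemma sub_card (T : finType) (C : {set T}) k : k <= #|C| ->
  exists W : {set T}, W \subset C /\ #|W| = k.
Proof.
move=> hk; exists [set x in take k (enum C)]; split.
  by apply/subsetP => x; rewrite inE => /mem_take; rewrite mem_enum.
rewrite cardsE; move/card_uniqP: (take_uniq k (enum_uniq (mem C))) => ->.
by rewrite size_takel // -cardE.
Qed.

Lemma pair_bound (r t n : nat) (S : {set knv n r}) :
  n = 3 * r - t -> t <= r -> two_packing (@kadj n r) S ->
  forall u v, u \in S -> v \in S -> u != v -> #|val u :&: val v| <= t - 1.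
Proof.
move=> hn htr HS u v uS vS uv.
have := forallP HS u; rewrite uS /= => /forallP /(_ v); rewrite vS uv /=.
case/and3P => _ _ /existsP Hw.
rewrite leqNgt; apply/negP => big.
pose C := ~: (sval u :|: sval v).
have cC : r <= #|C|.
  have := cardsC (sval u :|: sval v); have := cardsUI (sval u) (sval v).
  rewrite card_ord (eqP (svalP u)) (eqP (svalP v)) -/C. clearbody C. move=> h1 h2. set I := #|_ :&: _| in h1 big. set U := #|_ :|: _| in h1 h2. lia.
have [W [WC cW]] := sub_card cC.
have cW' : #|W| == r by apply/eqP.
apply: Hw; exists (exist _ W cW'); apply/andP; split; rewrite /kadj /=.
  rewrite disjoint_sym disjoints_subset; apply: subset_trans WC _.
  by rewrite /C setCU subsetIl.
rewrite disjoints_subset; apply: subset_trans WC _.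
by rewrite /C setCU subsetIr.
Qed.

Lemma psum_le (T : finType) (s : seq {set T}) c : uniq s ->
  {in s &, forall A B, A != B -> #|A :&: B| <= c} -> psum s <= 'C(size s, 2) * c.
Proof.
elim: s => [|A s IH] //= /andP[As us] H.
have H1 : \sum_(B <- s) #|A :&: B| <= \sum_(B <- s) c.
  rewrite big_seq_cond [X in _ <= X]big_seq_cond; apply: leq_sum => B /andP[Bs _].
  apply: H; rewrite ?inE ?eqxx ?Bs ?orbT //.
  by apply: contraNneq As => ->.
have H2 : psum s <= 'C(size s, 2) * c.
  apply: IH => // X Y Xs Ys; apply: H; by rewrite inE ?Xs ?Ys orbT.
move: H1; rewrite big_const_seq count_predT iter_addn_0 binS bin1 => H1.
rewrite mulnDl; lia.
Qed.

Definition e1 (p : nat) := nth 0 [::0;0;0;0;1;1;1;2;2;3] p.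
Definition e2 (p : nat) := nth 0 [::1;2;3;4;2;3;4;3;4;4] p.
Definition PA (i : 'I_5) : {set 'I_10} := [set p : 'I_10 | (e1 p == i) || (e2 p == i)].
Lemma PA4 i : #|PA i| = 4.
Proof. rewrite -sum1_card big_mkcond /= !big_ord_recl big_ord0 /= !inE /=.
case: i; do 5?case=>//. Qed.
Lemma PA1 i j : i != j -> #|PA i :&: PA j| = 1.
Proof. rewrite -sum1_card big_mkcond /= !big_ord_recl big_ord0 /= !inE /=.
case: i; do 5?case=>//; move=> ?; case: j; do 5?case=>//. Qed.
Lemma PA2 (p : 'I_10) : #|[set i : 'I_5 | p \in PA i]| <= 2.
Proof. rewrite -sum1_card big_mkcond /= !big_ord_recl big_ord0 /= !inE /=.
case: p; do 10?case=>//. Qed.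

Section Constr.
Variables (m q : nat).
Definition Lab := ('I_10 * 'I_m + 'I_5 * 'I_q)%type.
Definition mk (A : {set 'I_10}) (B : {set 'I_5}) : {set Lab} :=
  [set l : Lab | match l with inl pk => pk.1 \in A | inr jk => jk.1 \in B end].
Lemma mkI A B A' B' : mk A B :&: mk A' B' = mk (A :&: A') (B :&: B').
Proof. by apply/setP => -[[p k]|[j k]]; rewrite !inE. Qed.
Lemma card_mk A B : #|mk A B| = #|A| * m + #|B| * q.
Proof.
have inl_inj : injective (@inl ('I_10 * 'I_m)%type ('I_5 * 'I_q)%type) by move=> ? ? [].
have inr_inj : injective (@inr ('I_10 * 'I_m)%type ('I_5 * 'I_q)%type) by move=> ? ? [].
have -> : mk A B = inl @: setX A setT :|: inr @: setX B setT.
  apply/setP => -[x|x]; rewrite /mk in_set in_setU.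
    rewrite mem_imset //.
    rewrite [X in _ || X](_ : _ = false) ?orbF; last by apply/imsetP => -[].
    by rewrite !inE andbT.
  rewrite mem_imset //.
  rewrite [X in X || _](_ : _ = false) //; last by apply/imsetP => -[].
  by rewrite !inE andbT.
rewrite cardsU.
have -> : (inl @: setX A setT : {set Lab}) :&: inr @: setX B setT = set0.
  apply/setP => y; rewrite in_setI in_set0; apply/negP => /andP[/imsetP[? _ ->] /imsetP[? _]] //.
by rewrite cards0 subn0 !card_imset // !cardsX !cardsT !card_ord.
Qed.
End Constr.

Theorem lemma4p7 (r t n : nat) :
  3 <= r -> 2 <= t -> 4 * t <= r + 4 -> n = 3 * r - t ->
  5 <= rho2 (@kadj n r) ->
  exists S : {set knv n r},
    [/\ two_packing (@kadj n r) S, #|S| = 5 & forall x : 'I_n, ix S x <= 2].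
Proof.
move=> hr ht htr hn hrho.
have tler : t <= r by lia.
have [S0 /andP[HS0 cS0]] : exists S0 : {set knv n r},
    two_packing (@kadj n r) S0 && (5 <= #|S0|).
  case: (boolP [exists S0 : {set knv n r}, two_packing (@kadj n r) S0 && (5 <= #|S0|)])
    => [/existsP //|/existsPn H].
  exfalso.
  have : rho2 (@kadj n r) <= 4.
    apply/bigmax_leqP => S HS; by have := H S; rewrite HS /= -ltnNge.
  lia.
have Hb := pair_bound hn tler HS0.
have [L [uL mL sL]] : exists L, [/\ uniq L, {subset L <= S0} & size L = 5].
  exists (take 5 (enum S0)); split.
  - exact: take_uniq (enum_uniq _).
  - by move=> x /mem_take; rewrite mem_enum.
  - by rewrite size_takel // -cardE.
have key : 5 * r <= n + 10 * (t - 1).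
  have hsum : \sum_(A <- map sval L) #|A| = 5 * r.
    rewrite big_map (eq_bigr (fun _ => r)); last by move=> u _; rewrite (eqP (svalP u)).
    by rewrite big_const_seq count_predT iter_addn_0 sL mulnC.
  have := bonf (map sval L); rewrite hsum => h1.
  apply: (leq_trans h1); apply: leq_add.
    by apply: leq_trans (max_card _) _; rewrite card_ord.
  have : psum (map sval L) <= 'C(size (map sval L), 2) * (t - 1).
    apply: psum_le; first by rewrite (map_inj_uniq val_inj).
    move=> A B /mapP[u uL' ->] /mapP[v vL' ->] uv.
    apply: Hb; rewrite ?mL //.
  by rewrite size_map sL.
pose m := t - 1.
have em : m = t - 1 by [].
pose q := r - 4 * m.
have eqq : q = r - 4 * m by [].
clearbody m q.
have Hn : #|{: Lab m q}| <= n.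
  rewrite card_sum !card_prod !card_ord. lia.
pose g (l : Lab m q) : 'I_n := widen_ord Hn (enum_rank l).
have g_inj : injective g.
  by move=> x y /(congr1 val) /= /val_inj /enum_rank_inj.
pose X (i : 'I_5) := mk m q (PA i) [set i].
pose A (i : 'I_5) := g @: X i.
have cA i : #|A i| = r by rewrite card_imset // card_mk PA4 cards1; lia.
have cAI i j : i != j -> #|A i :&: A j| = m.
  move=> ij; rewrite -imsetI; last by move=> ? ? _ _; apply: g_inj.
  rewrite card_imset // mkI card_mk PA1 //.
  have -> : #|[set i] :&: [set j]| = 0.
    apply: eq_card0 => x; rewrite !inE; apply/andP => -[/eqP -> /eqP E].
    by rewrite E eqxx in ij.
  lia.
pose f (i : 'I_5) : knv n r := exist (fun B : {set 'I_n} => #|B| == r) (A i) (introT eqP (cA i)).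
have f_inj : injective f.
  move=> i j /(congr1 sval) /= Aij.
  case: (eqVneq i j) => // ij.
  have := cAI i j ij; rewrite Aij setIid cA; lia.
exists (f @: setT); split.
- apply/forallP => u; apply/implyP => /imsetP[i _ ->].
  apply/forallP => v; apply/implyP => /imsetP[j _ ->]; apply/implyP => fij.
  have ij : i != j by apply: contraNneq fij => ->.
  apply/and3P; split => //.
    by rewrite /kadj /= -setI_eq0 -cards_eq0 cAI //; lia.
  apply/existsP => -[w /andP[]]; rewrite /kadj /= => H1 H2.
  have sub : sval w \subset ~: (A i :|: A j).
    by rewrite setCU subsetI -!disjoints_subset disjoint_sym H1 H2.
  have h3 : r <= #|~: (A i :|: A j)|.
    by rewrite -(eqP (svalP w)); exact: subset_leq_card sub.
  have h2 : #|A i :|: A j| + #|~: (A i :|: A j)| = n by rewrite cardsC card_ord.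
  have h1 : #|A i :|: A j| + m = r + r by rewrite -(cAI i j ij) cardsUI !cA.
  lia.
- by rewrite card_imset // cardsT card_ord.
- move=> x; rewrite /ix.
  have sub : [set u in f @: setT | x \in sval u] \subset f @: [set i | x \in A i].
    apply/subsetP => u; rewrite inE => /andP[/imsetP[i _ ->] hx].
    by apply: imset_f; rewrite inE.
  apply: leq_trans (subset_leq_card sub) _; apply: leq_trans (leq_imset_card _ _) _.
  case: (pickP (fun l => g l == x)) => [l /eqP gl | none].
    have -> : [set i | x \in A i] = [set i | l \in X i].
      by apply/setP => i; rewrite !inE -gl /A mem_imset // inE.
    case: l {gl} => [[p k]|[j k]].
      apply: leq_trans _ (PA2 p); apply: subset_leq_card; apply/subsetP => i.
      by rewrite !inE.
    apply: leq_trans (_ : #|[set j]| <= 2); last by rewrite cards1.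
    apply: subset_leq_card; apply/subsetP => i; rewrite !inE eq_sym; done.
  have -> : [set i | x \in A i] = set0.
    apply/setP => i; rewrite !inE; apply/imsetP => -[l _ e].
    by have := none l; rewrite -e eqxx.
  by rewrite cards0.
Qed.
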